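(* Let $m\ge 1$ and $l\ge 0$ be integers and put $k=2^m l+2^{m-1}$. Then $$c(k)=c(2^m l)\,F(m-1),$$ where $F(m-1)=2^{2^{m-1}}+1$.
   Context: For $n\ge 0$, $c(n)=\sum_{i=0}^{n}\left(\binom{n}{i}\bmod 2\right)2^{i}$, the integer whose binary digits form the $n$-th row of Pascal's triangle modulo $2$. $F(j)=2^{2^j}+1$ is the $j$-th Fermat number. *)

(* Defs.v *)
From mathcomp Require Import all_boot.
Set Implicit Arguments. Unset Strict Implicit. Unset Printing Implicit Defensive.

Definition c (n : nat) : nat := \sum_(0 <= i < n.+1) ('C(n, i) %% 2) * 2 ^ i.

Definition F (j : nat) : nat := 2 ^ (2 ^ j) + 1.

(* Main.v *)
Require Import Defs.
From mathcomp Require Import all_boot zify.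

Lemma binSS2 n k : 'C(n.+2, k.+2) = 'C(n, k.+2) + 2 * 'C(n, k.+1) + 'C(n, k).
Proof. rewrite !binS; lia. Qed.

Lemma oddbin2 n k : k < 2 -> odd 'C(n.+2, k) = odd 'C(n, k).
Proof.
case: k => [_|[_|//]]; first by rewrite !bin0.
by rewrite !bin1 /= negbK.
Qed.

Lemma lucas2 a b i j : b < 2 -> j < 2 ->
  odd 'C(2 * a + b, 2 * i + j) = odd 'C(a, i) && odd 'C(b, j).
Proof.
move=> hb hj; elim: a i => [|a IH] [|i].
- by rewrite !muln0 !add0n bin0.
- rewrite muln0 add0n bin_small; last by lia.
  by rewrite bin0n.
- rewrite muln0 add0n bin0 /=.
  have -> : 2 * a.+1 + b = (2 * a + b).+2 by lia.
  rewrite oddbin2 //. have := IH 0. rewrite muln0 add0n bin0 /=. done.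
- have -> : 2 * a.+1 + b = (2 * a + b).+2 by lia.
  have -> : 2 * i.+1 + j = (2 * i + j).+2 by lia.
  rewrite binSS2 -addnA oddD oddD oddM /=.
  have -> : (2 * i + j).+2 = 2 * i.+1 + j by lia.
  by rewrite !IH binS oddD -andb_addl.
Qed.

Lemma lucas m a b i j : b < 2 ^ m -> j < 2 ^ m ->
  odd 'C(2 ^ m * a + b, 2 ^ m * i + j) = odd 'C(a, i) && odd 'C(b, j).
Proof.
elim: m a b i j => [|m IH] a b i j.
  rewrite expn0 !mul1n => hb hj.
  have -> : b = 0 by lia. have -> : j = 0 by lia.
  by rewrite !addn0 bin0 andbT.
move=> hb hj.
have eb : 2 ^ m.+1 * a + b = 2 * (2 ^ m * a + b %/ 2) + b %% 2.
  rewrite expnS; lia.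
have ej : 2 ^ m.+1 * i + j = 2 * (2 ^ m * i + j %/ 2) + j %% 2.
  rewrite expnS; lia.
have eb' : b = 2 * (b %/ 2) + b %% 2 by lia.
have ej' : j = 2 * (j %/ 2) + j %% 2 by lia.
rewrite eb ej lucas2 ?ltn_pmod // IH; try (rewrite expnS in hb hj; lia).
have := @lucas2 (b %/ 2) (b %% 2) (j %/ 2) (j %% 2) (ltn_pmod b (isT : 0 < 2)) (ltn_pmod j (isT : 0 < 2)).
rewrite -eb' -ej' => ->. by rewrite andbA.
Qed.

Lemma cE n M : n < M -> c n = \sum_(0 <= i < M) odd 'C(n, i) * 2 ^ i.
Proof.
move=> hM; rewrite /c [RHS](big_cat_nat _ (n := n.+1)) //=.
rewrite [X in _ = _ + X]big_nat_cond [X in _ = _ + X]big1 ?addn0.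
  2: { move=> i; case/andP=> /andP[hi _] _; by rewrite bin_small. }
by apply: eq_bigr => i _; rewrite modn2.
Qed.

Lemma dsum K a (f : nat -> nat) :
  \sum_(0 <= i < K * a) f i = \sum_(0 <= q < a) \sum_(0 <= r < K) f (K * q + r).
Proof.
elim: a => [|a IH]; first by rewrite muln0 !big_geq.
rewrite big_nat_recr //= -IH mulnS addnC (big_cat_nat _ (n := K * a)) //=; last by lia.
congr (_ + _).
rewrite -{1}(add0n (K * a)) big_addn.
have -> : K * a + K - K * a = K by lia.
by apply: eq_bigr => i _; rewrite addnC.
Qed.

Lemma cKl m l b : b < 2 ^ m ->
  c (2 ^ m * l + b) = (\sum_(0 <= q < l.+1) odd 'C(l, q) * 2 ^ (2 ^ m * q)) * c b.
Proof.
move=> hb.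
have hp : 0 < 2 ^ m by rewrite expn_gt0.
rewrite (@cE _ (2 ^ m * l.+1)); last by rewrite mulnS; lia.
rewrite dsum (@cE b (2 ^ m)) // big_distrl /=.
apply: eq_big_nat => q _.
rewrite big_distrr /=.
apply: eq_big_nat => r /andP[_ hr].
by rewrite lucas // -mulnb expnD mulnACA.
Qed.

Lemma c0 : c 0 = 1.
Proof. by rewrite /c big_nat1. Qed.

Lemma cpow m : c (2 ^ m) = F m.
Proof.
rewrite /c /F big_nat_recr //= binn addnC; congr (_ + _); first by rewrite mul1n.
have hp : 0 < 2 ^ m by rewrite expn_gt0.
rewrite big_ltn // bin0 big_nat_cond big1 ?addn0 //.
move=> i /andP[/andP[hi hi2] _].
have := @lucas m 1 0 0 i (expn_gt0 _ _) hi2.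
rewrite muln1 muln0 !add0n addn0 bin0n.
have -> : (i == 0) = false by apply/eqP; lia.
by rewrite andbF modn2 => ->.
Qed.

Theorem corollary4 (m l : nat) (hm : 1 <= m) :
  c (2 ^ m * l + 2 ^ m.-1) = c (2 ^ m * l) * F m.-1.
Proof.
case: m hm => [//|m] _ /=.
rewrite cKl; last by rewrite expnS; have := expn_gt0 2 m; lia.
rewrite -[2 ^ m.+1 * l]addn0 cKl ?expn_gt0 // c0 muln1 cpow.
by [].
Qed.
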